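(* Suppose Assumption A(ii) holds and $F$ is strongly $K$-convex with some modulus in $\mathrm{int}(K)$. Let $\{x^k\}$ be an infinite sequence generated by Algorithm 1 with $G_k\in\mathcal{S}_{\ell,\mu}(F,x^k)$ for all $k$, where $\ell\prec_K\mu$. Then: (i) $\{x^k\}$ converges to an efficient solution $x^*$ of $\min_K F(x)$; (ii) $\|x^{k+1}-x^*\|\le\sqrt{\max_{c^*\in C}\frac{\langle c^*,\ell\rangle}{\langle c^*,\mu\rangle}}\,\|x^k-x^*\|$ for all $k\ge0$.
   Context: $K\subset\mathbb{R}^m$ is a closed, convex, pointed cone with nonempty interior; $y\preceq_K y'$ iff $y'-y\in K$, $y\prec_K y'$ iff $y'-y\in\mathrm{int}(K)$. $K^*=\{c:\langle c,y\rangle\ge0\ \forall y\in K\}$; $C$ is a compact convex set with $0\notin C$, $\mathrm{cone}(C)=K^*$. $F:\mathbb{R}^n\to\mathbb{R}^m$ differentiable with Jacobian $JF$. $x^*$ is efficient if there is no $x$ with $F(x)\preceq_K F(x^* )$ and $F(x)\ne F(x^* )$; $K$-stationary if $\mathrm{range}(JF(x^* ))\cap(-\mathrm{int}(K))=\emptyset$. For differentiable $\Phi$: strongly $K$-convex with $\mu\in K$ means $J\Phi(x)(y-x)+\tfrac12\|y-x\|^2\mu\preceq_K\Phi(y)-\Phi(x)$ $\forall x,y$; $K$-smooth with $\ell\in K$ means $\Phi(y)-\Phi(x)\preceq_K J\Phi(x)(y-x)+\tfrac12\|y-x\|^2\ell$ $\forall x,y$. Surrogate class $\mathcal{S}_{\ell,\mu}(F,x^k)$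 ($\ell\in K,\mu\in\mathrm{int}(K)$): differentiable $G_k$ strongly $K$-convex with $\mu$ such that, with $x^{k+1}$ the minimizer of $x\mapsto\max_{c^*\in C}\langle c^*,G_k(x)\rangle$ and $H_k:=G_k-F+F(x^k)$: $F(x^{k+1})-F(x^k)\preceq_K G_k(x^{k+1})$; $H_k$ is $K$-smooth with $\ell$, $H_k(x^k)=0$, $JH_k(x^k)=0$. Algorithm 1: from $x^0$, choose $G_k\in\mathcal{S}_{\ell,\mu}(F,x^k)$, set $x^{k+1}:=\arg\min_x\max_{c^*\in C}\langle c^*,G_k(x)\rangle$, stop if $x^{k+1}=x^k$. Assumption A(ii): whenever $x^k\to x^*$ along an infinite index set $\mathcal{K}$, $G_k\in\mathcal{S}_{\ell,\mu}(F,x^k)$ and $\max_{c^*\in C}\langle c^*,G_k(x^{k+1})\rangle\to0$ along $\mathcal{K}$, $x^*$ is $K$-stationary. *)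

(* Defs.v *)
From HB Require Import structures.
From mathcomp Require Import all_boot all_order all_algebra.
From mathcomp Require Import all_classical all_reals all_analysis.

Set Implicit Arguments.
Unset Strict Implicit.
Unset Printing Implicit Defensive.

Import Order.TTheory GRing.Theory Num.Theory.
Import numFieldNormedType.Exports.

Local Open Scope classical_set_scope.
Local Open Scope ring_scope.

Section Defs.
Variable R : realType.

Definition dot {m : nat} (u v : 'rV[R]_m) : R := \sum_(i < m) u ord0 i * v ord0 i.
Definition enorm {m : nat} (u : 'rV[R]_m) : R := Num.sqrt (dot u u).

Definition proper_cone {m : nat} (K : set 'rV[R]_m) : Prop :=
  closed K /\ K 0 /\
  (forall t y, 0 <= t -> K y -> K (t *: y)) /\
  (forall y z, K y -> K z -> K (y + z)) /\
  (forall y, K y -> K (- y) -> y = 0) /\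
  (exists y, interior K y).

Definition dual_cone {m : nat} (K : set 'rV[R]_m) : set 'rV[R]_m :=
  [set c | forall y, K y -> 0 <= dot c y].

Definition convex_set' {m : nat} (C : set 'rV[R]_m) : Prop :=
  forall x y t, C x -> C y -> 0 <= t <= 1 -> C (t *: x + (1 - t) *: y).

Definition cone_of {m : nat} (C : set 'rV[R]_m) : set 'rV[R]_m :=
  [set y | exists t c, [/\ 0 <= t, C c & y = t *: c]].

Definition Kle {m : nat} (K : set 'rV[R]_m) (y y' : 'rV[R]_m) : Prop := K (y' - y).
Definition Klt {m : nat} (K : set 'rV[R]_m) (y y' : 'rV[R]_m) : Prop :=
  interior K (y' - y).

Definition maxC {m : nat} (C : set 'rV[R]_m) (y : 'rV[R]_m) : R :=
  sup [set dot c y | c in C].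

Definition differentiable_all {n m : nat} (Phi : 'rV[R]_n -> 'rV[R]_m) : Prop :=
  forall x, differentiable Phi x.

(* J Phi(x) v is 'd Phi x v (Frechet derivative) *)
Definition strongly_Kconvex {n m : nat} (K : set 'rV[R]_m)
  (Phi : 'rV[R]_n -> 'rV[R]_m) (mu : 'rV[R]_m) : Prop :=
  forall x y, Kle K ('d Phi x (y - x) + (2^-1 * enorm (y - x) ^+ 2) *: mu)
                    (Phi y - Phi x).

Definition Ksmooth {n m : nat} (K : set 'rV[R]_m)
  (Phi : 'rV[R]_n -> 'rV[R]_m) (l : 'rV[R]_m) : Prop :=
  forall x y, Kle K (Phi y - Phi x)
                    ('d Phi x (y - x) + (2^-1 * enorm (y - x) ^+ 2) *: l).

Definition is_argmin_step {n m : nat} (C : set 'rV[R]_m)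
  (G : 'rV[R]_n -> 'rV[R]_m) (z : 'rV[R]_n) : Prop :=
  forall x, maxC C (G z) <= maxC C (G x).

Definition surrogate {n m : nat} (K : set 'rV[R]_m) (C : set 'rV[R]_m)
  (l mu : 'rV[R]_m) (F : 'rV[R]_n -> 'rV[R]_m) (xk : 'rV[R]_n)
  (G : 'rV[R]_n -> 'rV[R]_m) : Prop :=
  let H := fun x => G x - F x + F xk in
  differentiable_all G /\
  strongly_Kconvex K G mu /\
  (forall z, is_argmin_step C G z -> Kle K (F z - F xk) (G z)) /\
  Ksmooth K H l /\
  H xk = 0 /\
  (forall v, 'd H xk v = 0).

(* sequence generated by Algorithm 1 (never stopping) *)
Definition alg1_seq {n m : nat} (K : set 'rV[R]_m) (C : set 'rV[R]_m)
  (l mu : 'rV[R]_m) (F : 'rV[R]_n -> 'rV[R]_m)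
  (x : nat -> 'rV[R]_n) (G : nat -> 'rV[R]_n -> 'rV[R]_m) : Prop :=
  forall k, surrogate K C l mu F (x k) (G k) /\ is_argmin_step C (G k) (x k.+1).

Definition K_stationary {n m : nat} (K : set 'rV[R]_m)
  (F : 'rV[R]_n -> 'rV[R]_m) (xs : 'rV[R]_n) : Prop :=
  forall v, ~ interior K (- 'd F xs v).

Definition efficient {n m : nat} (K : set 'rV[R]_m)
  (F : 'rV[R]_n -> 'rV[R]_m) (xs : 'rV[R]_n) : Prop :=
  forall x, Kle K (F x) (F xs) -> F x = F xs.

(* Assumption A(ii): an infinite index set is the range of a strictly
   increasing map phi : nat -> nat *)
Definition assumption_Aii {n m : nat} (K : set 'rV[R]_m) (C : set 'rV[R]_m)
  (l mu : 'rV[R]_m) (F : 'rV[R]_n -> 'rV[R]_m) : Prop :=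
  forall (x : nat -> 'rV[R]_n) (G : nat -> 'rV[R]_n -> 'rV[R]_m)
         (phi : nat -> nat) (xs : 'rV[R]_n),
    alg1_seq K C l mu F x G ->
    (forall j, (phi j < phi j.+1)%N) ->
    (fun j => x (phi j)) @ \oo --> xs ->
    (fun j => maxC C (G (phi j) (x (phi j).+1))) @ \oo --> (0 : R) ->
    K_stationary K F xs.

End Defs.

(* Main.v *)
Require Import Defs.
From HB Require Import structures.
From mathcomp Require Import all_boot all_order all_algebra.
From mathcomp Require Import all_classical all_reals all_analysis.
From mathcomp Require Import ring lra.
Import Order.TTheory GRing.Theory Num.Theory.
Import numFieldNormedType.Exports.
Local Open Scope classical_set_scope.
Local Open Scope ring_scope.
Set Implicit Arguments. Unset Strict Implicit.


Section Dot.
Variable R : realType.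

Lemma dotDr m (u v w : 'rV[R]_m) : dot u (v + w) = dot u v + dot u w.
Proof. by rewrite /dot -big_split; apply: eq_bigr => i _; rewrite mxE mulrDr. Qed.
Lemma dotZr m (u v : 'rV[R]_m) a : dot u (a *: v) = a * dot u v.
Proof. by rewrite /dot mulr_sumr; apply: eq_bigr => i _; rewrite mxE mulrCA. Qed.
Lemma dotNr m (u v : 'rV[R]_m) : dot u (- v) = - dot u v.
Proof. by rewrite -scaleN1r dotZr mulN1r. Qed.
Lemma dotBr m (u v w : 'rV[R]_m) : dot u (v - w) = dot u v - dot u w.
Proof. by rewrite dotDr dotNr. Qed.
Lemma dot0r m (u : 'rV[R]_m) : dot u 0 = 0.
Proof. by rewrite /dot big1 // => i _; rewrite mxE mulr0. Qed.
Lemma dotC m (u v : 'rV[R]_m) : dot u v = dot v u.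
Proof. by rewrite /dot; apply: eq_bigr => i _; rewrite mulrC. Qed.
Lemma dotZl m (u v : 'rV[R]_m) a : dot (a *: u) v = a * dot u v.
Proof. by rewrite dotC dotZr dotC. Qed.
Lemma dot_ge0 m (u : 'rV[R]_m) : 0 <= dot u u.
Proof. by rewrite /dot sumr_ge0 // => i _; rewrite -expr2 sqr_ge0. Qed.
Lemma dotNN m (u v : 'rV[R]_m) : dot (u - v) (u - v) = dot (v - u) (v - u).
Proof. by rewrite -[u - v]opprB dotNr dotC dotNr opprK. Qed.

Lemma coord_le_norm m (v : 'rV[R]_m) i : `|v ord0 i| <= `|v|.
Proof.
have /mapP[j Hj ->] : `|v ord0 i| \in [seq `|v x.1 x.2| | x : 'I_1 * 'I_m].
  by apply/mapP; exists (ord0, i) => //=; rewrite mem_enum.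
by rewrite [leRHS]/Num.norm /= mx_normrE; apply/bigmax_geP; right => /=; exists j.
Qed.

Lemma coord_sq_le_dot m (v : 'rV[R]_m) i : v ord0 i ^+ 2 <= dot v v.
Proof.
rewrite /dot (bigD1 i) //= -expr2 lerDl sumr_ge0 // => j _.
by rewrite -expr2 sqr_ge0.
Qed.

Lemma enorm2 m (v : 'rV[R]_m) : enorm v ^+ 2 = dot v v.
Proof. by rewrite /enorm sqr_sqrtr // dot_ge0. Qed.

Lemma norm_le_enorm m (v : 'rV[R]_m) : `|v| <= enorm v.
Proof.
rewrite [leLHS]/Num.norm /= mx_normrE; apply: bigmax_le => [|[i j] _].
  exact: sqrtr_ge0.
rewrite /enorm -sqrtr_sqr ler_sqrt ?dot_ge0 // (ord1 i).
exact: coord_sq_le_dot.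
Qed.

Lemma norm_sq_le_dot m (v : 'rV[R]_m) : `|v| ^+ 2 <= dot v v.
Proof. by rewrite -enorm2 lerXn2r ?nnegrE ?normr_ge0 ?sqrtr_ge0 // norm_le_enorm. Qed.

Lemma dot_le_norm m (v : 'rV[R]_m) : dot v v <= m%:R * `|v| ^+ 2.
Proof.
rewrite /dot mulr_natl -[X in _ *+ X]card_ord -sumr_const; apply: ler_sum => i _.
rewrite -expr2 -[v ord0 i ^+ 2]ger0_norm ?sqr_ge0 // normrX.
by rewrite lerXn2r ?nnegrE ?normr_ge0 // coord_le_norm.
Qed.

Lemma dot_bound m (c y : 'rV[R]_m) : `|dot c y| <= m%:R * (`|c| * `|y|).
Proof.
rewrite /dot (le_trans (ler_norm_sum _ _ _)) //.
rewrite mulr_natl -[X in _ *+ X]card_ord -sumr_const; apply: ler_sum => i _.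
by rewrite normrM ler_pM ?coord_le_norm.
Qed.

End Dot.

Lemma enorm_le_norm (R : realType) m (v : 'rV[R]_m) : enorm v <= Num.sqrt m%:R * `|v|.
Proof.
have h : Num.sqrt (dot v v) <= Num.sqrt (m%:R * `|v| ^+ 2).
  by rewrite ler_sqrt ?dot_le_norm // mulr_ge0 // sqr_ge0.
by rewrite sqrtrM // sqrtr_sqr normr_id in h.
Qed.

Lemma enorm_ge0 (R : realType) m (v : 'rV[R]_m) : 0 <= enorm v.
Proof. exact: sqrtr_ge0. Qed.


Section Cone.
Variable R : realType.

Lemma dot0l m (u : 'rV[R]_m) : dot 0 u = 0.
Proof. by rewrite dotC dot0r. Qed.

Lemma int_pos m (K : set 'rV[R]_m) y : interior K y ->
  exists2 e, 0 < e & forall c, dual_cone K c -> e * `|c| <= dot c y.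
Proof.
move=> /nbhs_ballP [e e0 He]; exists (e / 2); first by rewrite divr_gt0.
move=> c Kc; have [->|c0] := eqVneq c 0; first by rewrite normr0 mulr0 dot0l.
have nc : 0 < `|c| by rewrite normr_gt0.
set s := e / 2 / `|c|.
have s0 : 0 < s by rewrite /s !divr_gt0.
have : K (y - s *: c).
  apply: He; rewrite -ball_normE /= opprB addrC subrK normrZ gtr0_norm //.
  by rewrite /s divfK ?gt_eqF // ltr_pdivrMr // ltr_pMr // ltr1n.
move=> /Kc; rewrite dotBr dotZr subr_ge0 => H.
apply: le_trans H.
have -> : e / 2 * `|c| = s * `|c| ^+ 2 by rewrite /s expr2 mulrA divfK ?gt_eqF.
by rewrite ler_wpM2l ?(ltW s0) // norm_sq_le_dot.
Qed.

Lemma arith (a b gw Lc D D0 mc lc fx fz fk phw phz eps t eta Q m0 : R) :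
 (1-t)*Lc + 2^-1*((1-t)^+2 * D)*mc <= a - gw ->
 (-t)*Lc + 2^-1*(t^+2*D)*mc <= b - gw ->
 phw - eps < gw -> phz <= phw -> b <= phz ->
 a - fx + fk <= 2^-1*D0*lc -> fz - fk <= b -> fx <= fz ->
 lc <= Q * mc -> m0 <= mc -> 0 < m0 -> eps = eta * t * m0 / 2 -> 0 < t -> t < 1 -> 0 < eta ->
 0 <= D -> 0 <= D0 -> 0 <= Q ->
 (1 - t) * D - Q * D0 <= eta.
Proof.
move=> H1 H2 Hc Hp Hb Sm S3 Fxz CQ Cm m0p Heps t0 t1 eta0 D0' D00 Q0.
rewrite Heps in Hc.
have mcp : 0 < mc by lra.
have A : t * (1 - t) * D * mc <= t * (a - b) * 2 + eta * t * m0.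
  nra.
have B : a - b <= 2^-1 * D0 * lc by lra.
have B2 : t * (a - b) * 2 <= t * D0 * Q * mc.
  have : 2^-1 * D0 * lc <= 2^-1 * D0 * (Q * mc) by rewrite ler_wpM2l //; lra.
  nra.
have E : eta * t * m0 <= eta * t * mc by rewrite ler_wpM2l //; nra.
have F : (t * mc) * ((1 - t) * D) <= (t * mc) * (Q * D0 + eta) by nra.
rewrite ler_pM2l in F; [lra | nra].
Qed.
Lemma limit_arg (D D0 Q : R) : 0 <= D -> 0 <= Q * D0 ->
  (forall t eta, 0 < t -> t < 1 -> 0 < eta -> (1-t)*D - Q*D0 <= eta) -> D <= Q*D0.
Proof.
move=> D0' QD H; rewrite leNgt; apply/negP => Hlt.
have Dp : 0 < D by lra.
set d := D - Q * D0.
have dp : 0 < d by rewrite /d; lra.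
have tp : 0 < d / (4 * D) by rewrite divr_gt0 // mulr_gt0.
have tD : d / (4 * D) * D = d / 4 by field; rewrite gt_eqF.
have t1 : d / (4 * D) < 1.
  rewrite ltr_pdivrMr ?mulr_gt0 // mul1r; rewrite /d; lra.
have := H _ (d / 4) tp t1 (divr_gt0 dp (ltr0n _ 4)).
rewrite mulrBl mul1r tD /d; lra.
Qed.

Lemma Kle_dot m (K : set 'rV[R]_m) c a b : dual_cone K c -> Kle K a b -> dot c a <= dot c b.
Proof. by move=> Kc /Kc; rewrite dotBr subr_ge0. Qed.

Lemma enormZ2 m (v : 'rV[R]_m) a : enorm (a *: v) ^+ 2 = a ^+ 2 * dot v v.
Proof. by rewrite enorm2 dotZl dotZr mulrA expr2. Qed.

Lemma core m n (K C : set 'rV[R]_m) (Fn G : 'rV[R]_n -> 'rV[R]_m) l mu xk z x Q m0 :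
 (forall c, C c -> dual_cone K c) ->
 C !=set0 ->
 (forall y, has_ubound [set dot c y | c in C]) ->
 surrogate K C l mu Fn xk G -> is_argmin_step C G z ->
 0 < m0 -> (forall c, C c -> m0 <= dot c mu) ->
 (forall c, C c -> dot c l <= Q * dot c mu) -> 0 <= Q ->
 (forall c, C c -> dot c (Fn x) <= dot c (Fn z)) ->
 dot (z - x) (z - x) <= Q * dot (xk - x) (xk - x).
Proof.
move=> CK Cne Cub [_ [Gsc [Giii [Hsm [H0 dH0]]]]] zmin m0p Cm0 CQ Q0 Fxz.
have Dge := dot_ge0 (z - x); have D0ge := dot_ge0 (xk - x).
apply: limit_arg => //; first exact: mulr_ge0.
move=> t eta t0 t1 eta0.
have eps0 : 0 < eta * t * m0 / 2 by rewrite !(mulr_gt0, divr_gt0).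
set w := z + t *: (x - z).
have hs : has_sup [set dot c (G w) | c in C].
  split; last exact: Cub.
  by case: Cne => c0 Cc0; exists (dot c0 (G w)); exists c0.
have [_ [c Cc <-] Hc] := sup_adherent eps0 hs.
have Kc := CK c Cc.
have phz : Defs.maxC C (G z) <= Defs.maxC C (G w) := zmin w.
have bz : dot c (G z) <= Defs.maxC C (G z).
  by apply: ub_le_sup; [exact: Cub | exists c].
have S1 := Kle_dot Kc (Gsc w x).
have S2 := Kle_dot Kc (Gsc w z).
have exw : x - w = (1 - t) *: (x - z).
  by apply/matrixP => i j; rewrite !mxE; ring.
have ezw : z - w = (- t) *: (x - z).
  by apply/matrixP => i j; rewrite !mxE; ring.
rewrite exw enormZ2 in S1; rewrite ezw enormZ2 in S2.
rewrite !linearZ /= (dotNN x z) in S1 S2.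
have Sm := Kle_dot Kc (Hsm xk x).
rewrite H0 dH0 enorm2 (dotNN x xk) subr0 add0r in Sm.
have S3 := Kle_dot Kc (Giii z zmin).
move: (dot (z - x) (z - x)) (dot (xk - x) (xk - x)) Dge D0ge S1 S2 Sm S3 => D D0 Dge D0ge S1 S2 Sm S3.
rewrite ?dotDr ?dotZr ?dotBr ?dotNr in S1 S2 Sm S3.
have := Fxz c Cc; have := CQ c Cc; have := Cm0 c Cc.
move: Sm S1 S2 S3 Hc phz bz.
rewrite sqrrN => Sm S1 S2 S3 Hc phz bz Cm CQ' Fx.
exact: (arith S1 S2 Hc phz bz Sm S3 Fx CQ' Cm m0p erefl t0 t1 eta0 Dge D0ge Q0).
Qed.

End Cone.


Lemma key (R : realType) (a b d u v w : R) : b <= d -> u <= v -> a - b <= u ->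
      v + w = a - d -> 0 < w -> d < a -> False.
Proof. move=> *; lra. Qed.

Theorem theorem3 (R : realType) (n m : nat)
  (K C : set 'rV[R]_m) (F : 'rV[R]_n -> 'rV[R]_m) (l mu : 'rV[R]_m)
  (x : nat -> 'rV[R]_n) (G : nat -> 'rV[R]_n -> 'rV[R]_m) :
  proper_cone K ->
  compact C -> convex_set' C -> ~ C 0 -> cone_of C = dual_cone K ->
  differentiable_all F ->
  assumption_Aii K C l mu F ->
  (exists muF, interior K muF /\ strongly_Kconvex K F muF) ->
  K l -> interior K mu -> Klt K l mu ->
  alg1_seq K C l mu F x G ->
  (forall k, x k.+1 != x k) ->
  exists xs : 'rV[R]_n,
    [/\ x @ \oo --> xs,
        efficient K F xs
      & forall k, enorm (x k.+1 - xs) <=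
          Num.sqrt (sup [set dot c l / dot c mu | c in C]) * enorm (x k - xs)].
Proof.
move=> Kpc cC _ nC0 coneC dF _ _ Kl imu ilm alg _.
have CK : forall c, C c -> dual_cone K c.
  by move=> c Cc; rewrite -coneC; exists 1, c; split => //; rewrite scale1r.
have Cne : C !=set0.
  have : dual_cone K 0 by move=> y _; rewrite dot0l.
  by rewrite -coneC => -[t [c [_ Cc _]]]; exists c.
have [B [B0 CB]] : exists B, 0 < B /\ forall c, C c -> `|c| <= B.
  have [M [Mreal HM]] := compact_bounded cC.
  exists (`|M| + 1); split; first by rewrite ltr_wpDl.
  apply: HM; rewrite (le_lt_trans (real_ler_norm Mreal)) // ltrDl //.
have [r [r0 Cr]] : exists r, 0 < r /\ forall c, C c -> r <= `|c|.
  have Ccl : closed C := compact_closed (@norm_hausdorff _ _) cC.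
  have : open (~` C) by rewrite openC.
  move=> /[dup] op; rewrite openE => /(_ 0 nC0) /nbhs_ballP [e e0 He].
  exists e; split => // c Cc; rewrite leNgt; apply/negP => ce.
  by apply: (He c) => //; rewrite -ball_normE /= sub0r normrN.
have [e1 e10 He1] := int_pos imu.
have [e2 e20 He2] := int_pos ilm.
have mupos : forall c, C c -> e1 * r <= dot c mu.
  move=> c Cc; apply: le_trans (He1 c (CK c Cc)); rewrite ler_wpM2l ?(ltW e10) //.
  exact: Cr.
have mlpos : forall c, C c -> e2 * r <= dot c mu - dot c l.
  move=> c Cc; rewrite -dotBr; apply: le_trans (He2 c (CK c Cc)).
  by rewrite ler_wpM2l ?(ltW e20) // Cr.
have dotub : forall y c, C c -> dot c y <= m%:R * (B * `|y|).
  move=> y c Cc; apply: le_trans (ler_norm _) _; apply: le_trans (dot_bound c y) _.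
  by rewrite ler_wpM2l // ler_wpM2r // CB.
have Cub : forall y, has_ubound [set dot c y | c in C].
  by move=> y; exists (m%:R * (B * `|y|)) => _ [c Cc <-]; exact: dotub.
set M1 := m%:R * (B * `|mu|).
have lpos : forall c, C c -> 0 <= dot c l by move=> c Cc; exact: CK.
have M1pos : 0 < M1.
  case: Cne => c Cc; apply: lt_le_trans (dotub mu c Cc).
  by apply: lt_le_trans (mupos c Cc); rewrite mulr_gt0.
set Q := sup [set dot c l / dot c mu | c in C].
have ratio_le : forall c, C c -> dot c l / dot c mu <= 1 - e2 * r / M1.
  move=> c Cc; have mp : 0 < dot c mu by apply: lt_le_trans (mupos c Cc); rewrite mulr_gt0.
  rewrite ler_pdivrMr // mulrBl mul1r.
  have ge0 : 0 <= e2 * r / M1 by rewrite divr_ge0 // ltW // mulr_gt0.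
  have : e2 * r / M1 * dot c mu >= e2 * r / M1 * (e1 * r) by rewrite ler_wpM2l // mupos.
  have : 0 <= e2 * r / M1 * (e1 * r) by rewrite mulr_ge0 // ltW // mulr_gt0.
  have : e2 * r / M1 * dot c mu <= e2 * r.
    rewrite mulrAC ler_pdivrMr //; apply: ler_wpM2l; [exact: ltW (mulr_gt0 e20 r0) | exact: dotub].
  have := mlpos c Cc; lra.
have Qub : has_ubound [set dot c l / dot c mu | c in C].
  by exists (1 - e2 * r / M1) => _ [c Cc <-]; exact: ratio_le.
have Qle : Q <= 1 - e2 * r / M1.
  apply: ge_sup; first by case: Cne => c Cc; exists (dot c l / dot c mu), c.
  by move=> _ [c Cc <-]; exact: ratio_le.
have CQ : forall c, C c -> dot c l <= Q * dot c mu.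
  move=> c Cc; have mp : 0 < dot c mu by apply: lt_le_trans (mupos c Cc); rewrite mulr_gt0.
  rewrite -ler_pdivrMr //; apply: ub_le_sup Qub _ _; by exists c.
have Q0 : 0 <= Q.
  have [c Cc] := Cne; have Hc : [set dot c l / dot c mu | c in C] (dot c l / dot c mu) by exists c.
  apply: (le_trans _ (ub_le_sup Qub Hc)).
  apply: divr_ge0; first exact: lpos.
  by apply: ltW; apply: lt_le_trans (mupos c Cc); apply: mulr_gt0.
have Q1 : Q < 1.
  apply: le_lt_trans Qle _; rewrite ltrBlDr ltrDl.
  by apply: divr_gt0 => //; apply: mulr_gt0.
have m0p : 0 < e1 * r by rewrite mulr_gt0.
set q := Num.sqrt Q.
have q0 : 0 <= q := sqrtr_ge0 _.
have q1 : q < 1.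
  by rewrite /q -[X in _ < X]sqrtr1 (@ltr_sqrt _ Q 1 ltr01); exact: Q1.
have contr : forall k y, (forall c, C c -> dot c (F y) <= dot c (F (x k.+1))) ->
    enorm (x k.+1 - y) <= q * enorm (x k - y).
  move=> k y Hy; have [Hs Ha] := alg k.
  have := core CK Cne Cub Hs Ha m0p mupos CQ Q0 Hy.
  by rewrite /enorm /q -sqrtrM // ler_sqrt // mulr_ge0 // dot_ge0.
have mono1 : forall c, C c -> forall k, dot c (F (x k.+1)) <= dot c (F (x k)).
  move=> c Cc k; have [[_ [_ [Giii [_ [H0 _]]]]] Ha] := alg k.
  have S3 := Kle_dot (CK c Cc) (Giii _ Ha); rewrite dotBr in S3.
  have Gk : G k (x k) = 0 by move: H0; rewrite subrK.
  have H1 : dot c (G k (x k.+1)) <= Defs.maxC C (G k (x k)).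
    apply: (le_trans _ (Ha (x k))).
    by apply: ub_le_sup; [exact: Cub | exists c].
  have H2 : Defs.maxC C (G k (x k)) <= 0.
    rewrite Gk; apply: ge_sup; first by have [c' Cc'] := Cne; exists (dot c' 0), c'.
    by move=> _ [c' _ <-]; rewrite dot0r.
  lra.
have mono : forall c, C c -> forall i j, (i <= j)%N -> dot c (F (x j)) <= dot c (F (x i)).
  move=> c Cc i j /subnKC <-; elim: (j - i)%N => [|d IH]; first by rewrite addn0.
  by rewrite addnS; apply: le_trans (mono1 c Cc _) IH.
have geo : forall y, (forall k c, C c -> dot c (F y) <= dot c (F (x k.+1))) ->
    forall k, enorm (x k - y) <= q ^+ k * enorm (x 0 - y).
  move=> y Hy; elim => [|k IH]; first by rewrite expr0 mul1r.
  apply: le_trans (contr k y (fun c Cc => Hy k c Cc)) _.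
  by rewrite exprS -mulrA ler_wpM2l.
have geoj : forall k j, (k <= j)%N -> enorm (x k - x j) <= q ^+ k * enorm (x 0 - x j).
  move=> k j; elim: k => [|k IH] kj; first by rewrite expr0 mul1r.
  apply: le_trans (contr k (x j) (fun c Cc => mono c Cc _ _ kj)) _.
  by rewrite exprS -mulrA ler_wpM2l // IH // ltnW.
pose s : R := Num.sqrt (n%:R : R).
have s0 : 0 <= s := sqrtr_ge0 _.
have qlt : `|q| < 1 by rewrite ger0_norm.
have qcv := cvg_expr qlt.
have [p Hp] : exists p, q ^+ p * s <= 2^-1.
  have e0 : 0 < (2 * (s + 1))^-1 by rewrite invr_gt0 mulr_gt0 // ltr_wpDl.
  have [p Hp] := filter_ex (cvgr0_norm_lt _ qcv _ e0).
  exists p; rewrite ger0_norm ?exprn_ge0 // in Hp.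
  have qp0 : 0 <= q ^+ p by rewrite exprn_ge0.
  have h : (2 * (s + 1))^-1 * (2 * (s + 1)) = 1 by rewrite mulVf // gt_eqF // mulr_gt0 // ltr_wpDl.
  nra.
set E := 2 * `|x 0 - x p|.
have E0 : 0 <= E by rewrite mulr_ge0.
have bnd : forall j, (p <= j)%N -> `|x 0 - x j| <= E.
  move=> j pj.
  have eqj : x 0 - x j = (x 0 - x p) + (x p - x j) by rewrite addrA subrK.
  have h1 := ler_normD (x 0 - x p) (x p - x j); rewrite -eqj in h1.
  have h2 : `|x p - x j| <= q ^+ p * (s * `|x 0 - x j|).
    apply: le_trans (norm_le_enorm _) _; apply: le_trans (geoj _ _ pj) _.
    by rewrite ler_wpM2l ?exprn_ge0 // enorm_le_norm.
  have := normr_ge0 (x 0 - x j); have := exprn_ge0 p q0; rewrite /E; nra.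
have cvx : cvg (x @ \oo).
  apply/cauchy_cvgP/(cauchy_exP (x @ \oo)) => eps eps0.
  have d0 : 0 < eps / (s * E + 1) by rewrite divr_gt0 // ltr_wpDl // mulr_ge0.
  have [k [Hk pk]] := filter_ex (filterI (cvgr0_norm_lt _ qcv _ d0) (nbhs_infty_ge p)).
  exists (x k); apply: filterS (nbhs_infty_ge k) => j kj /=.
  rewrite -ball_normE /=.
  apply: le_lt_trans (norm_le_enorm _) _; apply: le_lt_trans (geoj _ _ kj) _.
  have h1 : enorm (x 0 - x j) <= s * E.
    apply: le_trans (enorm_le_norm _) _; rewrite ler_wpM2l // bnd //.
    exact: leq_trans pk kj.
  rewrite ger0_norm ?exprn_ge0 // in Hk.
  have h2 : eps / (s * E + 1) * (s * E + 1) = eps by rewrite divfK // gt_eqF // ltr_wpDl // mulr_ge0.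
  have := exprn_ge0 k q0; have := enorm_ge0 (x 0 - x j); have := mulr_ge0 s0 E0; nra.
set xs := lim (x @ \oo).
have Fcv : (F \o x) @ \oo --> F xs.
  exact: (cvg_comp x F cvx (differentiable_continuous (dF xs))).
have Fxs : forall c, C c -> forall k, dot c (F xs) <= dot c (F (x k)).
  move=> c Cc k; rewrite leNgt; apply/negP => Hlt.
  set A := m%:R * `|c|.
  have A0 : 0 <= A by rewrite mulr_ge0.
  set dl := dot c (F xs) - dot c (F (x k)).
  have dl0 : 0 < dl by rewrite /dl subr_gt0.
  have e0 : 0 < dl / (A + 1) by rewrite divr_gt0 // ltr_wpDl.
  have [j [Hj kj]] := filter_ex (filterI (cvgr_dist_lt _ _ Fcv _ e0) (nbhs_infty_ge k)).
  have h1 := mono c Cc _ _ kj.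
  have h2 := ler_norm (dot c (F xs - F (x j))).
  have h3 := dot_bound c (F xs - F (x j)).
  rewrite dotBr in h2 h3.
  move: Hj => /= Hj.
  have h4 : dl / (A + 1) * (A + 1) = dl by rewrite divfK // gt_eqF // ltr_wpDl.
  move: h4 e0 Hj; set e' := dl / (A + 1) => h4 e0 Hj.
  have h5 : A * `|F xs - F (x j)| <= A * e' by rewrite ler_wpM2l // ltW.
  have h4' : e' * A + e' = dl by rewrite -[RHS]h4; ring.
  have h6 : dot c (F xs) - dot c (F (x j)) <= A * `|F xs - F (x j)|.
    by rewrite /A -mulrA; exact: le_trans h2 h3.
  rewrite mulrC in h4'.
  exact: (@key R _ _ _ _ _ _ h1 h5 h6 h4' e0 Hlt).
exists xs; split.
- exact: cvx.
- move=> y Hy.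
  have Hy' : forall k c, C c -> dot c (F y) <= dot c (F (x k.+1)).
    by move=> k c Cc; apply: le_trans (Kle_dot (CK c Cc) Hy) (Fxs c Cc k.+1).
  have gy := geo y Hy'.
  have ycv : x @ \oo --> y.
    apply/cvgrPdist_lt => e e0.
    have d0 : 0 < e / (enorm (x 0 - y) + 1) by rewrite divr_gt0 // ltr_wpDl // enorm_ge0.
    apply: filterS (cvgr0_norm_lt _ qcv _ d0) => k /= Hk.
    rewrite distrC; apply: le_lt_trans (norm_le_enorm _) _; apply: le_lt_trans (gy k) _.
    rewrite ger0_norm ?exprn_ge0 // in Hk.
    have h2 : e / (enorm (x 0 - y) + 1) * (enorm (x 0 - y) + 1) = e.
      by rewrite divfK // gt_eqF // ltr_wpDl // enorm_ge0.
    have := exprn_ge0 k q0; have := enorm_ge0 (x 0 - y); nra.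
  by rewrite -(norm_cvg_unique cvx ycv).
- by move=> k; exact: (contr k xs (fun c Cc => Fxs c Cc k.+1)).
Qed.
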